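(* Let $q>1$ and $\hbar,m>0$. For $N\ge0$ let $$H_N^{(s)}(x,it;q)=\sum_{k=0}^{\lfloor N/2\rfloor}\frac{\big(\frac{i\hbar t}{2m}\big)^k[N]_q!\,x^{N-2k}}{[N-2k]_q!\,k!}.$$ Then for real $x,t,p$, $$e^{-\frac{i}{\hbar}\frac{p^2}{2m}t}\,e_q\Big(\frac{i}{\hbar}px\Big)=\sum_{N=0}^\infty\Big(\frac{i}{\hbar}\Big)^N\frac{p^N}{[N]_q!}H_N^{(s)}(x,it;q),$$ and each $\psi(x,t)=H_N^{(s)}(x,it;q)$ solves the $q$-Schrödinger equation $\big(\partial_t-\frac{i\hbar}{2m}D_x^2\big)\psi(x,t)=0$ for $x\ne0$.
   Context: For $n\ge 0$ let $[n]_q=\frac{q^n-1}{q-1}$, $[0]_q!=1$, $[n]_q!=[1]_q\cdots[n]_q$, and $e_q(z)=\sum_{n\ge0}z^n/[n]_q!$ (entire for $q>1$). $D_x$ is the $q$-derivative in $x$ at fixed $t$: $D_xf(x,t)=\frac{f(qx,t)-f(x,t)}{(q-1)x}$, $D_x^2=D_x\circ D_x$. *)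

(* Defs.v *)
From Stdlib Require Import Reals ClassicalEpsilon Factorial.
From Coquelicot Require Import Coquelicot.
Open Scope R_scope.

Definition qint (q : R) (n : nat) : R := (q ^ n - 1) / (q - 1).

Fixpoint qfact (q : R) (n : nat) : R :=
  match n with
  | O => 1
  | S k => qfact q k * qint q (S k)
  end.

Definition eq_term (q : R) (z : C) (n : nat) : C := (z ^ n / RtoC (qfact q n))%C.

(* e_q(z) = sum_{n>=0} z^n/[n]_q!  (the sum of the convergent series; chosen by
   classical description, it is the unique limit whenever the series converges) *)
Definition e_q (q : R) (z : C) : C :=
  epsilon (inhabits (RtoC 0)) (fun l => is_series (eq_term q z) l).

Definition expI (theta : R) : C := (cos theta, sin theta).

Definition Hs (q hbar m : R) (N : nat) (x t : R) : C :=
  sum_n (fun k =>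
    ((Ci * RtoC (hbar * t / (2 * m))) ^ k * RtoC (qfact q N)
      * RtoC (x ^ (N - 2 * k)) / (RtoC (qfact q (N - 2 * k)) * RtoC (INR (fact k))))%C)
    (Nat.div2 N).

Definition Dx (q : R) (f : R -> R -> C) (x t : R) : C :=
  ((f (Rmult q x) t - f x t) / RtoC ((q - 1) * x))%C.

Definition Dx2 (q : R) (f : R -> R -> C) : R -> R -> C := Dx q (Dx q f).

(* Main.v *)
Require Import Defs.
From Stdlib Require Import Reals Lia Lra Factorial ClassicalEpsilon.
From Coquelicot Require Import Coquelicot.
Open Scope R_scope.

Lemma sum_n_C (f : nat -> C) N :
  sum_n f N = (sum_n (fun n => fst (f n)) N, sum_n (fun n => snd (f n)) N).
Proof.
  induction N.
  - rewrite !sum_O. destruct (f 0%nat); reflexivity.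
  - rewrite !sum_Sn, IHN. reflexivity.
Qed.

Lemma is_series_C (f : nat -> C) a b :
  is_series (fun n => fst (f n)) a -> is_series (fun n => snd (f n)) b ->
  is_series f (a, b).
Proof.
  unfold is_series. intros Ha Hb.
  apply filterlim_locally. intros eps.
  pose proof (proj1 (filterlim_locally _ _) Ha eps) as Ha'; clear Ha; rename Ha' into Ha.
  pose proof (proj1 (filterlim_locally _ _) Hb eps) as Hb'; clear Hb; rename Hb' into Hb.
  generalize (filter_and _ _ Ha Hb). apply filter_imp.
  intros n [H1 H2]. rewrite sum_n_C. split; assumption.
Qed.

Lemma is_series_C_fst (f : nat -> C) l :
  is_series f l -> is_series (fun n => fst (f n)) (fst l).
Proof.
  unfold is_series. intros H.
  apply filterlim_locally. intros eps.
  pose proof (proj1 (filterlim_locally _ _) H eps) as H'; clear H; rename H' into H.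
  revert H. apply filter_imp. intros n [H1 H2]. rewrite sum_n_C in H1. exact H1.
Qed.

Lemma is_series_C_snd (f : nat -> C) l :
  is_series f l -> is_series (fun n => snd (f n)) (snd l).
Proof.
  unfold is_series. intros H.
  apply filterlim_locally. intros eps.
  pose proof (proj1 (filterlim_locally _ _) H eps) as H'; clear H; rename H' into H.
  revert H. apply filter_imp. intros n [H1 H2]. rewrite sum_n_C in H2. exact H2.
Qed.


Lemma sum_even_aux {G : AbelianMonoid} (h : nat -> G) :
  (forall k, h (S (2 * k)) = zero) ->
  forall M, sum_n h (2 * M) = sum_n (fun k => h (2 * k)%nat) M /\
            sum_n h (S (2 * M)) = sum_n (fun k => h (2 * k)%nat) M.
Proof.
  intros Hz M. induction M as [|M [IH1 IH2]].
  - pose proof (Hz 0%nat) as H0. simpl in H0. simpl. rewrite sum_Sn, !sum_O, H0, plus_zero_r. split; reflexivity.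
  - assert (E : (2 * S M = S (S (2 * M)))%nat) by lia.
    assert (E1 : sum_n h (2 * S M) = sum_n (fun k => h (2 * k)%nat) (S M)).
    { rewrite E, sum_Sn, IH2, sum_Sn. f_equal. f_equal. lia. }
    split. exact E1.
    rewrite sum_Sn, E1, Hz, plus_zero_r. reflexivity.
Qed.

Lemma sum_even {G : AbelianMonoid} (h : nat -> G) :
  (forall k, h (S (2 * k)) = zero) ->
  forall N, sum_n h N = sum_n (fun k => h (2 * k)%nat) (Nat.div2 N).
Proof.
  intros Hz N. destruct (Nat.Even_or_Odd N) as [[M HM]|[M HM]]; subst N.
  - rewrite Nat.div2_double. apply (sum_even_aux h Hz M).
  - replace (2 * M + 1)%nat with (S (2 * M)) by lia.
    rewrite Nat.div2_succ_double. apply (sum_even_aux h Hz M).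
Qed.

Definition spread {G : AbelianMonoid} (a : nat -> G) (j : nat) : G :=
  if Nat.even j then a (Nat.div2 j) else zero.

Lemma spread_odd {G : AbelianMonoid} (a : nat -> G) k : spread a (S (2 * k)) = zero.
Proof. unfold spread. rewrite Nat.even_succ, Nat.odd_mul. simpl. reflexivity. Qed.

Lemma spread_even {G : AbelianMonoid} (a : nat -> G) k : spread a (2 * k) = a k.
Proof. unfold spread. rewrite Nat.div2_double, Nat.even_mul. reflexivity. Qed.

Lemma filterlim_div2 : filterlim Nat.div2 eventually eventually.
Proof.
  intros P [N0 HN]. exists (2 * N0)%nat. intros n Hn. apply HN.
  rewrite Nat.div2_div. apply Nat.div_le_lower_bound; lia.
Qed.

Lemma is_series_spread {K : AbsRing} {V : NormedModule K} (a : nat -> V) l :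
  is_series a l -> is_series (spread a) l.
Proof.
  unfold is_series. intros H.
  eapply filterlim_ext.
  - intros N. symmetry. rewrite (sum_even (spread a) (spread_odd a) N).
    apply sum_n_ext. intros k. apply spread_even.
  - eapply filterlim_comp. apply filterlim_div2. exact H.
Qed.

Lemma is_series_spreadS {K : AbsRing} {V : NormedModule K} (a : nat -> V) l :
  is_series a l -> is_series (fun j => match j with O => zero | S j' => spread a j' end) l.
Proof.
  intros H. apply is_series_decr_1.
  assert (E : forall z : V, z = zero -> plus l (opp z) = l).
  { intros z ->. transitivity (plus l (@zero V)). f_equal. exact (@opp_zero V). exact (@plus_zero_r V l). }
  rewrite E by reflexivity.
  apply is_series_spread. exact H.
Qed.


Lemma abs_fst_le (z : C) : Rabs (fst z) <= Cmod z.
Proof. eapply Rle_trans. 2: apply Rmax_Cmod. apply Rmax_l. Qed.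
Lemma abs_snd_le (z : C) : Rabs (snd z) <= Cmod z.
Proof. eapply Rle_trans. 2: apply Rmax_Cmod. apply Rmax_r. Qed.

Lemma ex_abs_fst (a : nat -> C) : ex_series (fun n => Cmod (a n)) ->
  ex_series (fun n => Rabs (fst (a n))).
Proof.
  intros H. apply (@ex_series_le R_AbsRing R_CompleteNormedModule) with (2 := H). intros n. change (norm (Rabs (fst (a n)))) with (Rabs (Rabs (fst (a n)))).
  rewrite Rabs_Rabsolu. apply abs_fst_le.
Qed.
Lemma ex_abs_snd (a : nat -> C) : ex_series (fun n => Cmod (a n)) ->
  ex_series (fun n => Rabs (snd (a n))).
Proof.
  intros H. apply (@ex_series_le R_AbsRing R_CompleteNormedModule) with (2 := H). intros n. change (norm (Rabs (snd (a n)))) with (Rabs (Rabs (snd (a n)))).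
  rewrite Rabs_Rabsolu. apply abs_snd_le.
Qed.

Lemma is_series_mult_C (a b : nat -> C) la lb :
  is_series a la -> is_series b lb ->
  ex_series (fun n => Cmod (a n)) -> ex_series (fun n => Cmod (b n)) ->
  is_series (fun n => sum_n (fun k => (a k * b (n - k)%nat)%C) n) (la * lb)%C.
Proof.
  intros Ha Hb Aa Ab.
  pose proof (is_series_C_fst _ _ Ha) as Ha1.
  pose proof (is_series_C_snd _ _ Ha) as Ha2.
  pose proof (is_series_C_fst _ _ Hb) as Hb1.
  pose proof (is_series_C_snd _ _ Hb) as Hb2.
  pose proof (ex_abs_fst _ Aa) as Aa1.
  pose proof (ex_abs_snd _ Aa) as Aa2.
  pose proof (ex_abs_fst _ Ab) as Ab1.
  pose proof (ex_abs_snd _ Ab) as Ab2.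
  destruct la as [la1 la2]; destruct lb as [lb1 lb2].
  simpl in *.
  replace ((la1, la2) * (lb1, lb2))%C with (la1 * lb1 - la2 * lb2, la1 * lb2 + la2 * lb1).
  2: { unfold Cmult. simpl. reflexivity. }
  apply is_series_C.
  - pose proof (is_series_mult _ _ _ _ Ha1 Hb1 Aa1 Ab1) as P1.
    pose proof (is_series_mult _ _ _ _ Ha2 Hb2 Aa2 Ab2) as P2.
    pose proof (is_series_minus _ _ _ _ P1 P2) as P.
    eapply is_series_ext. 2: exact P.
    intros n. cbv beta. rewrite sum_n_C. simpl.
    rewrite !sum_n_Reals. rewrite minus_sum. reflexivity.
  - pose proof (is_series_mult _ _ _ _ Ha1 Hb2 Aa1 Ab2) as P1.
    pose proof (is_series_mult _ _ _ _ Ha2 Hb1 Aa2 Ab1) as P2.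
    pose proof (is_series_plus _ _ _ _ P1 P2) as P.
    eapply is_series_ext. 2: exact P.
    intros n. cbv beta. rewrite sum_n_C. simpl.
    rewrite !sum_n_Reals. rewrite plus_sum. reflexivity.
Qed.


Definition spreadO {G : AbelianMonoid} (a : nat -> G) (j : nat) : G :=
  if Nat.even j then zero else a (Nat.div2 j).

Lemma spreadO_S {G : AbelianMonoid} (a : nat -> G) n : spreadO a (S n) = spread a n.
Proof.
  unfold spreadO, spread. rewrite Nat.even_succ, <- Nat.negb_even.
  destruct (Nat.Even_or_Odd n) as [[M HM]|[M HM]]; subst n.
  - rewrite Nat.div2_succ_double, Nat.div2_double, Nat.even_mul. reflexivity.
  - replace (2 * M + 1)%nat with (S (2 * M)) by lia.
    rewrite Nat.even_succ, Nat.odd_mul. reflexivity.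
Qed.

Lemma is_series_spreadO {K : AbsRing} {V : NormedModule K} (a : nat -> V) l :
  is_series a l -> is_series (spreadO a) l.
Proof.
  intros H. apply is_series_decr_1.
  assert (E : forall z : V, z = zero -> plus l (opp z) = l).
  { intros z ->. transitivity (plus l (@zero V)). f_equal. exact (@opp_zero V). exact (@plus_zero_r V l). }
  rewrite E by reflexivity.
  eapply is_series_ext. intros n. symmetry. apply spreadO_S.
  apply is_series_spread. exact H.
Qed.

Lemma is_series_RtoC (r : nat -> R) l c :
  is_series r l -> is_series (fun i => (RtoC (r i) * c)%C) (RtoC l * c)%C.
Proof.
  intros H. destruct c as [c1 c2].
  replace (RtoC l * (c1, c2))%C with (l * c1, l * c2).
  2: { apply injective_projections; simpl; ring. }
  apply is_series_C.
  - eapply is_series_ext. 2: apply (is_series_scal_r c1 _ _ H). intros n. simpl. ring.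
  - eapply is_series_ext. 2: apply (is_series_scal_r c2 _ _ H). intros n. simpl. ring.
Qed.

Lemma is_series_C_unique (f : nat -> C) l l' : is_series f l -> is_series f l' -> l = l'.
Proof.
  intros H H'. apply injective_projections.
  - rewrite <- (is_series_unique _ _ (is_series_C_fst _ _ H)).
    apply is_series_unique. apply is_series_C_fst. exact H'.
  - rewrite <- (is_series_unique _ _ (is_series_C_snd _ _ H)).
    apply is_series_unique. apply is_series_C_snd. exact H'.
Qed.

Lemma exp_series (x : R) : is_series (fun n => x ^ n / INR (fact n)) (exp x).
Proof.
  unfold exp. destruct (exist_exp x) as [l Hl]. simpl.
  unfold exp_in in Hl.
  eapply is_series_ext. 2: apply is_series_Reals; exact Hl.
  intros n. simpl. unfold Rdiv. ring.
Qed.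

Lemma cos_series (x : R) : is_series (fun i => cos_n i * (x²) ^ i) (cos x).
Proof.
  unfold cos. destruct (exist_cos (x²)) as [l Hl]. apply is_series_Reals. exact Hl.
Qed.

Lemma sin_series (x : R) : is_series (fun i => x * (sin_n i * (x²) ^ i)) (sin x).
Proof.
  unfold sin. destruct (exist_sin (x²)) as [l Hl].
  apply (is_series_scal_l x (fun i => sin_n i * (x²) ^ i)). apply is_series_Reals. exact Hl.
Qed.


Lemma powCi_even (th : R) i : ((Ci * RtoC th) ^ (2 * i))%C = RtoC ((-1) ^ i * (th²) ^ i).
Proof.
  rewrite Cpow_mult_r.
  replace ((Ci * RtoC th) ^ 2)%C with (RtoC (-1 * th²)).
  2: { unfold Rsqr. apply injective_projections; simpl; ring. }
  rewrite <- RtoC_pow. f_equal. apply Rpow_mult_distr.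
Qed.

Lemma powCi_odd (th : R) i : ((Ci * RtoC th) ^ (S (2 * i)))%C = (RtoC (th * ((-1) ^ i * (th²) ^ i)) * Ci)%C.
Proof.
  rewrite Cpow_S, powCi_even. rewrite RtoC_mult. 
  apply injective_projections; simpl; ring.
Qed.

Lemma expI_series (th : R) :
  is_series (fun k => ((Ci * RtoC th) ^ k / RtoC (INR (fact k)))%C) (expI th).
Proof.
  pose proof (is_series_spread _ _ (is_series_RtoC _ _ 1%C (cos_series th))) as HE.
  pose proof (is_series_spreadO _ _ (is_series_RtoC _ _ Ci (sin_series th))) as HO.
  pose proof (is_series_plus _ _ _ _ HE HO) as H.
  replace (expI th) with (plus (RtoC (cos th) * 1)%C (RtoC (sin th) * Ci)%C).
  2: { unfold expI. apply injective_projections; simpl; ring. }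
  eapply is_series_ext. 2: exact H.
  intros n. cbv beta.
  destruct (Nat.Even_or_Odd n) as [[M HM]|[M HM]]; subst n.
  - rewrite spread_even. unfold spreadO. rewrite Nat.even_mul. simpl (negb _).
    rewrite powCi_even. rewrite <- RtoC_div by apply INR_fact_neq_0.
    unfold cos_n. apply injective_projections; simpl; field; apply INR_fact_neq_0.
  - replace (2 * M + 1)%nat with (S (2 * M)) by lia.
    rewrite spread_odd. unfold spreadO. rewrite Nat.even_succ, Nat.odd_mul, Nat.div2_succ_double.
    simpl (negb _).
    replace (Nat.odd 2 && Nat.odd M)%bool with false by reflexivity. cbv iota.
    rewrite powCi_odd. unfold sin_n. replace (2 * M + 1)%nat with (S (2 * M)) by lia.
    pose proof (INR_fact_neq_0 (S (2 * M))).
    apply injective_projections; simpl; field; auto.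
Qed.


Section Q.
Variable q : R.
Hypothesis hq : 1 < q.

Lemma qint_S n : qint q (S n) = qint q n + q ^ n.
Proof. unfold qint. simpl. field. lra. Qed.

Lemma qint_ge n : INR n <= qint q n.
Proof.
  induction n.
  - unfold qint. simpl. unfold Rdiv. rewrite Rminus_diag, Rmult_0_l. lra.
  - rewrite qint_S, S_INR. assert (1 <= q ^ n) by (apply pow_R1_Rle; lra). lra.
Qed.

Lemma qfact_ge n : INR (fact n) <= qfact q n.
Proof.
  induction n.
  - simpl. lra.
  - simpl qfact. change (fact (S n)) with (S n * fact n)%nat. rewrite mult_INR.
    rewrite Rmult_comm. apply Rmult_le_compat; try apply pos_INR; auto. apply qint_ge.
Qed.

Lemma qfact_pos n : 0 < qfact q n.
Proof. eapply Rlt_le_trans. 2: apply qfact_ge. apply INR_fact_lt_0. Qed.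

Lemma qfact_neq0 n : qfact q n <> 0.
Proof. apply Rgt_not_eq, qfact_pos. Qed.

Lemma qint_pos n : (0 < n)%nat -> 0 < qint q n.
Proof. intros. eapply Rlt_le_trans. 2: apply qint_ge. apply lt_0_INR. auto. Qed.

Lemma RtoC_neq0 r : r <> 0 -> RtoC r <> 0%C.
Proof. intros H E. apply H. apply (f_equal fst) in E. simpl in E. exact E. Qed.

Lemma Cmod_eq_term z n : Cmod (eq_term q z n) <= Cmod z ^ n / INR (fact n).
Proof.
  unfold eq_term. rewrite Cmod_div by (apply RtoC_neq0, qfact_neq0).
  rewrite Cmod_pow, Cmod_R, Rabs_pos_eq by (left; apply qfact_pos).
  unfold Rdiv. apply Rmult_le_compat_l. apply pow_le, Cmod_ge_0.
  apply Rinv_le_contravar. apply INR_fact_lt_0. apply qfact_ge.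
Qed.

Lemma ex_Cmod_eq_term z : ex_series (fun n => Cmod (eq_term q z n)).
Proof.
  apply (@ex_series_le R_AbsRing R_CompleteNormedModule) with (b := fun n => Cmod z ^ n / INR (fact n)).
  - intros n. change (norm (Cmod (eq_term q z n))) with (Rabs (Cmod (eq_term q z n))).
    rewrite Rabs_pos_eq by apply Cmod_ge_0. apply Cmod_eq_term.
  - eexists. apply exp_series.
Qed.

Lemma e_q_series z : is_series (eq_term q z) (e_q q z).
Proof.
  unfold e_q. apply epsilon_spec.
  assert (H : ex_series (eq_term q z)).
  { apply (@ex_series_le C_AbsRing C_CompleteNormedModule) with (b := fun n => Cmod (eq_term q z n)).
    - intros n. apply Rle_refl.
    - apply ex_Cmod_eq_term. }
  exact H.
Qed.
End Q.


Lemma CiR_pow r j : ((Ci * RtoC r) ^ j = Ci ^ j * RtoC (r ^ j))%C.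
Proof. rewrite Cpow_mult_l, RtoC_pow. reflexivity. Qed.

Lemma Ci_pow_2k k n : (Ci ^ (2 * k + n) = RtoC ((-1) ^ k) * Ci ^ n)%C.
Proof.
  rewrite Cpow_add_r, Cpow_mult_r.
  replace (Ci ^ 2)%C with (RtoC (-1)) by (apply injective_projections; simpl; ring).
  rewrite RtoC_pow. reflexivity.
Qed.

Lemma term_eq (q hbar m x t p : R) (hq : 1 < q) (hh : 0 < hbar) (hm : 0 < m) k n :
  let th := - (p ^ 2 / (2 * m)) * t / hbar in
  (((Ci * RtoC th) ^ k / RtoC (INR (fact k))) *
    eq_term q (Ci / RtoC hbar * RtoC (p * x)) n)%C =
  ((Ci / RtoC hbar) ^ (2 * k + n) * RtoC (p ^ (2 * k + n)) / RtoC (qfact q (2 * k + n)) *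
   ((Ci * RtoC (hbar * t / (2 * m))) ^ k * RtoC (qfact q (2 * k + n))
      * RtoC (x ^ (2 * k + n - 2 * k)) / (RtoC (qfact q (2 * k + n - 2 * k)) * RtoC (INR (fact k)))))%C.
Proof.
  intros th. unfold eq_term.
  replace (2 * k + n - 2 * k)%nat with n by lia.
  assert (Eh : (Ci / RtoC hbar = Ci * RtoC (/ hbar))%C).
  { rewrite RtoC_inv by lra. reflexivity. }
  rewrite Eh.
  replace (Ci * RtoC (/ hbar) * RtoC (p * x))%C with (Ci * RtoC (/ hbar * (p * x)))%C.
  2: { rewrite RtoC_mult. ring. }
  rewrite !CiR_pow, Ci_pow_2k.
  pose proof (INR_fact_neq_0 k) as F1.
  pose proof (qfact_neq0 q hq n) as F2.
  pose proof (qfact_neq0 q hq (2 * k + n)) as F3.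
  transitivity (Ci ^ k * Ci ^ n * RtoC (th ^ k / INR (fact k) * ((/ hbar * (p * x)) ^ n / qfact q n)))%C.
  { rewrite !RtoC_mult, !RtoC_div by auto. field. split; apply RtoC_neq0; auto. }
  transitivity (Ci ^ k * Ci ^ n * RtoC ((-1) ^ k * (/ hbar) ^ (2 * k + n) * p ^ (2 * k + n) / qfact q (2 * k + n) *
      ((hbar * t / (2 * m)) ^ k * qfact q (2 * k + n) * x ^ n / (qfact q n * INR (fact k)))))%C.
  2: { rewrite !RtoC_mult, !RtoC_div by (try apply Rmult_integral_contrapositive; auto).
       rewrite !RtoC_mult. field. repeat split; apply RtoC_neq0; auto. }
  f_equal. f_equal.
  replace th with ((-1) * ((p ^ 2) * ((/ hbar) ^ 2 * (hbar * t / (2 * m))))).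
  2: { unfold th. field. lra. }
  rewrite !Rpow_mult_distr, !pow_add, <- !pow_mult.
  field. auto.
Qed.


Lemma Cmod_Ci : Cmod Ci = 1.
Proof. unfold Cmod. replace (fst Ci ^ 2 + snd Ci ^ 2) with 1 by (simpl; ring). apply sqrt_1. Qed.

Lemma part1 (q hbar m : R) (hq : 1 < q) (hh : 0 < hbar) (hm : 0 < m) x t p :
     is_series
       (fun N : nat =>
          ((Ci / RtoC hbar) ^ N * RtoC (p ^ N) / RtoC (qfact q N) * Hs q hbar m N x t)%C)
       (expI (- (p ^ 2 / (2 * m)) * t / hbar) * e_q q (Ci / RtoC hbar * RtoC (p * x)))%C.
Proof.
  set (th := - (p ^ 2 / (2 * m)) * t / hbar).
  set (z := (Ci / RtoC hbar * RtoC (p * x))%C).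
  set (v := fun k => ((Ci * RtoC th) ^ k / RtoC (INR (fact k)))%C).
  pose proof (is_series_spread _ _ (expI_series th)) as Hv. fold v in Hv.
  pose proof (e_q_series q hq z) as Hu.
  assert (Av : ex_series (fun n => Cmod (spread v n))).
  { exists (exp (Rabs th)).
    eapply is_series_ext. 2: apply (is_series_spread _ _ (exp_series (Rabs th))).
    intros n. unfold spread. destruct (Nat.even n).
    - unfold v. rewrite Cmod_div by (apply RtoC_neq0, INR_fact_neq_0).
      rewrite Cmod_pow, Cmod_mult, Cmod_Ci, !Cmod_R, Rmult_1_l.
      rewrite (Rabs_pos_eq (INR _)) by apply pos_INR. reflexivity.
    - symmetry. apply Cmod_0. }
  pose proof (is_series_mult_C _ _ _ _ Hv Hu Av (ex_Cmod_eq_term q hq z)) as H.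
  eapply is_series_ext. 2: exact H.
  intros N. cbv beta.
  rewrite (sum_even (fun k => (spread v k * eq_term q z (N - k)%nat)%C)).
  2: { intros k. rewrite spread_odd. apply injective_projections; simpl; ring. }
  unfold Hs.
  rewrite <- (sum_n_mult_l (K := C_Ring)).
  apply sum_n_ext_loc. intros k Hk.
  rewrite spread_even.
  assert (HN : N = (2 * k + (N - 2 * k))%nat).
  { assert (2 * Nat.div2 N <= N)%nat. { rewrite Nat.div2_div. apply Nat.mul_div_le. lia. } lia. }
  set (n := (N - 2 * k)%nat) in *. clearbody n. subst N.
  unfold v, z, th. etransitivity. apply (term_eq q hbar m x t p hq hh hm k n). replace (2 * k + n - 2 * k)%nat with n by lia. reflexivity.
Qed.



Lemma is_derive_RtoC_mult (f : R -> R) t f' c :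
  is_derive f t f' -> is_derive (fun s => (RtoC (f s) * c)%C) t (RtoC f' * c)%C.
Proof.
  intros H. destruct c as [c1 c2].
  assert (E : forall r, (RtoC r * (c1, c2))%C = (r * c1, r * c2)).
  { intros r. apply injective_projections; simpl; ring. }
  rewrite E. eapply is_derive_ext. intros s. symmetry. apply E.
  apply (@is_derive_scal_l R_AbsRing (prod_NormedModule R_AbsRing R_NormedModule R_NormedModule) f t f' (c1, c2)).
  exact H.
Qed.

Lemma is_derive_sum_C (g : nat -> R -> C) (g' : nat -> C) t M :
  (forall k, is_derive (g k) t (g' k)) ->
  is_derive (fun s => @sum_n C_AbelianMonoid (fun k => g k s) M) t (@sum_n C_AbelianMonoid g' M).
Proof.
  intros H. induction M.
  - rewrite sum_O. apply is_derive_ext with (f := g 0%nat). intros s. symmetry. exact (@sum_O C_AbelianMonoid (fun k => g k s)). apply H.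
  - rewrite sum_Sn. apply is_derive_ext with (f := fun s => @plus C_AbelianMonoid (@sum_n C_AbelianMonoid (fun k => g k s) M) (g (S M) s)).
    intros s. symmetry. exact (@sum_Sn C_AbelianMonoid (fun k => g k s) M).
    apply (@is_derive_plus R_AbsRing (prod_NormedModule R_AbsRing R_NormedModule R_NormedModule)).
    exact IHM. apply H.
Qed.

Lemma sum_lin3 (f g h : nat -> C) c1 c2 c3 M :
  (c1 * sum_n f M + c2 * sum_n g M + c3 * sum_n h M)%C =
  sum_n (fun k => c1 * f k + c2 * g k + c3 * h k)%C M.
Proof.
  induction M.
  - rewrite !sum_O. reflexivity.
  - rewrite !sum_Sn, <- IHM. change plus with Cplus. ring.
Qed.


Ltac Ceq := match goal with |- ?A = ?B => change (@eq C A B) end.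

Section P.
Variables q hbar m : R.
Hypothesis hq : 1 < q.
Hypothesis hh : 0 < hbar.
Hypothesis hm : 0 < m.
Variable N : nat.

Definition aa : C := (Ci * RtoC (hbar / (2 * m)))%C.
Definition Kc (k : nat) : C :=
  (aa ^ k * RtoC (qfact q N) / (RtoC (qfact q (N - 2 * k)) * RtoC (INR (fact k))))%C.
Definition hterm (k : nat) (y s : R) : C := (RtoC (s ^ k * y ^ (N - 2 * k)) * Kc k)%C.

Lemma Hs_eq y s : Hs q hbar m N y s = sum_n (fun k => hterm k y s) (Nat.div2 N).
Proof.
  unfold Hs. apply sum_n_ext. intros k. unfold hterm, Kc, aa.
  replace (hbar * s / (2 * m)) with ((hbar / (2 * m)) * s) by (field; lra).
  rewrite (RtoC_mult (hbar / (2 * m)) s), Cmult_assoc, Cpow_mult_l, <- RtoC_pow, RtoC_mult.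
  unfold Cdiv. match goal with |- ?A = ?B => change (@eq C A B) end. ring.
Qed.

Lemma hterm_derive k x t :
  is_derive (fun s => hterm k x s) t (RtoC (INR k * t ^ Init.Nat.pred k * x ^ (N - 2 * k)) * Kc k)%C.
Proof.
  unfold hterm. apply is_derive_RtoC_mult.
  auto_derive. trivial. replace (k + (k + 0))%nat with (2 * k)%nat by lia.
  match goal with |- ?A = ?B => change (@eq R A B) end. ring.
Qed.

Definition R2 (x : R) (n : nat) : R :=
  match n with
  | O => 0
  | S O => 0
  | S (S n') => qint q (S (S n')) * qint q (S n') * x ^ n'
  end.

Lemma R2_val x n (hx : x <> 0) :
  let a := (q - 1) * (q * x) in let b := (q - 1) * x in
  / (a * b) * (q * (q * x)) ^ n + (- (/ a + / b) / b) * (q * x) ^ n + / (b * b) * x ^ n = R2 x n.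
Proof.
  intros a b. unfold a, b.
  assert (q <> 0) by lra. assert (q - 1 <> 0) by lra.
  rewrite !Rpow_mult_distr.
  destruct n as [|[|n']].
  - simpl. field. auto.
  - simpl. field. auto.
  - simpl R2. unfold qint. simpl. field. auto.
Qed.

Lemma Dx2_expand (F : R -> R -> C) x t (hx : x <> 0) :
  let a := (q - 1) * (q * x) in let b := (q - 1) * x in
  Dx2 q F x t = (RtoC (/ (a * b)) * F (Rmult q (Rmult q x)) t + RtoC (- (/ a + / b) / b) * F (Rmult q x) t
                 + RtoC (/ (b * b)) * F x t)%C.
Proof.
  intros a b. unfold Dx2, Defs.Dx. fold b. fold a.
  assert (q <> 0) by lra. assert (q - 1 <> 0) by lra.
  assert (Ha : a <> 0) by (unfold a; apply Rmult_integral_contrapositive; split; auto; apply Rmult_integral_contrapositive; auto).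
  assert (Hb : b <> 0) by (unfold b; apply Rmult_integral_contrapositive; auto).
  rewrite RtoC_div by auto. rewrite !RtoC_inv by (auto; apply Rmult_integral_contrapositive; auto).
  rewrite RtoC_opp, RtoC_plus, !RtoC_inv by auto. rewrite !RtoC_mult.
  field. split; apply RtoC_neq0; auto.
Qed.


Lemma sum_n_shift (f : nat -> C) M :
  sum_n f (S M) = (f 0%nat + sum_n (fun k => f (S k)) M)%C.
Proof.
  induction M.
  - rewrite sum_Sn, !sum_O. reflexivity.
  - rewrite sum_Sn, IHM, (sum_Sn (fun k => f (S k))). change plus with Cplus. Ceq. ring.
Qed.

Lemma final_eq x t :
  sum_n (fun k => (RtoC (INR k * t ^ Init.Nat.pred k * x ^ (N - 2 * k)) * Kc k)%C) (Nat.div2 N) =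
  (aa * sum_n (fun k => (RtoC (t ^ k * R2 x (N - 2 * k)) * Kc k)%C) (Nat.div2 N))%C.
Proof.
  assert (HN : (2 * Nat.div2 N <= N /\ N - 2 * Nat.div2 N <= 1)%nat).
  { destruct (Nat.Even_or_Odd N) as [[M HM]|[M HM]]; subst N.
    - rewrite Nat.div2_double. lia.
    - replace (2 * M + 1)%nat with (S (2 * M)) by lia. rewrite Nat.div2_succ_double. lia. }
  revert HN. generalize (Nat.div2 N). intros M [HM1 HM2].
  destruct M as [|M].
  - rewrite !sum_O.
    replace (INR 0 * t ^ Init.Nat.pred 0 * x ^ (N - 2 * 0)) with 0 by (simpl; ring).
    replace (R2 x (N - 2 * 0)) with 0.
    2: { destruct N as [|[|N']]; simpl; auto. lia. }
    apply injective_projections; simpl; ring.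
  - rewrite sum_n_shift, sum_Sn.
    replace (R2 x (N - 2 * S M)) with 0.
    2: { destruct (N - 2 * S M)%nat as [|[|N']] eqn:E; simpl; auto. lia. }
    change plus with Cplus.
    replace (INR 0 * t ^ Init.Nat.pred 0 * x ^ (N - 2 * 0)) with 0 by (simpl; ring).
    transitivity (sum_n (fun k => aa * (RtoC (t ^ k * R2 x (N - 2 * k)) * Kc k))%C M).
    2: { rewrite (sum_n_mult_l (K := C_Ring)). change mult with Cmult.
         rewrite Rmult_0_r.
         replace (RtoC 0 * Kc (S M))%C with (RtoC 0) by (apply injective_projections; simpl; ring).
         change (@sum_n (Ring.AbelianMonoid C_Ring)) with (@sum_n C_AbelianMonoid). Ceq. ring. }
    transitivity (sum_n (fun k : nat => (RtoC (INR (S k) * t ^ Init.Nat.pred (S k) * x ^ (N - 2 * S k)) * Kc (S k))%C) M).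
    { apply injective_projections; simpl; ring. }
    apply sum_n_ext_loc. intros k Hk.
    set (n' := (N - 2 * S k)%nat).
    assert (E2 : (N - 2 * k = S (S n'))%nat) by (unfold n'; lia).
    rewrite E2. simpl R2. simpl Init.Nat.pred.
    unfold Kc. fold n'. rewrite E2.
    change (qfact q (S (S n'))) with (qfact q n' * qint q (S n') * qint q (S (S n'))).
    change (fact (S k)) with (S k * fact k)%nat. rewrite mult_INR.
    pose proof (qfact_neq0 q hq n') as F1.
    pose proof (INR_fact_neq_0 k) as F2.
    assert (F3 : qint q (S n') <> 0) by (apply Rgt_not_eq, qint_pos; auto; lia).
    assert (F4 : qint q (S (S n')) <> 0) by (apply Rgt_not_eq, qint_pos; auto; lia).
    assert (F5 : INR (S k) <> 0) by (apply not_0_INR; lia).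
    rewrite Cpow_S. rewrite !RtoC_mult.
    Ceq.
    field. repeat split; apply RtoC_neq0; auto.
Qed.

Lemma part2_main x t (hx : x <> 0) :
  is_derive (fun s : R => Hs q hbar m N x s) t
    ((Ci * RtoC (hbar / (2 * m))) * Dx2 q (Hs q hbar m N) x t)%C.
Proof.
  apply is_derive_ext with (f := fun s => @sum_n C_AbelianMonoid (fun k => hterm k x s) (Nat.div2 N)).
  { intros s. symmetry. exact (Hs_eq x s). }
  replace ((Ci * RtoC (hbar / (2 * m))) * Dx2 q (Hs q hbar m N) x t)%C with
    (sum_n (fun k => (RtoC (INR k * t ^ Init.Nat.pred k * x ^ (N - 2 * k)) * Kc k)%C) (Nat.div2 N)).
  { apply (is_derive_sum_C (fun k s => hterm k x s)). intros k. apply hterm_derive. }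
  rewrite final_eq. fold aa. f_equal.
  rewrite (Dx2_expand (Hs q hbar m N) x t hx).
  rewrite !Hs_eq. rewrite sum_lin3.
  apply sum_n_ext. intros k. unfold hterm.
  rewrite <- (R2_val x (N - 2 * k) hx).
  rewrite !RtoC_mult, !RtoC_plus, !RtoC_mult.
  match goal with |- ?A = ?B => change (@eq C A B) end.
  ring.
Qed.

End P.


Theorem mainTheorem13 (q hbar m : R) (hq : 1 < q) (hh : 0 < hbar) (hm : 0 < m) :
  (forall x t p : R,
     is_series
       (fun N : nat =>
          ((Ci / RtoC hbar) ^ N * RtoC (p ^ N) / RtoC (qfact q N) * Hs q hbar m N x t)%C)
       (expI (- (p ^ 2 / (2 * m)) * t / hbar) * e_q q (Ci / RtoC hbar * RtoC (p * x)))%C)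
  /\
  (forall (N : nat) (x t : R), x <> 0 ->
     is_derive (fun s : R => Hs q hbar m N x s) t
       ((Ci * RtoC (hbar / (2 * m))) * Dx2 q (Hs q hbar m N) x t)%C).
Proof.
  split.
  - intros x t p. apply part1; assumption.
  - intros N x t hx. eapply part2_main; eauto.
Qed.
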